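(* Let $\tau,\lambda$ be types of degree $d$. There exists an arrangement of $\tau$ into $\lambda$ if and only if $\lambda$ can be obtained from $\tau$ by a finite sequence of elementary forgets followed by a finite sequence of elementary merges. In particular $a(\tau,\lambda)>0$ if and only if $\tau\le\lambda$ in the partial order on types of degree $d$ generated by elementary merges and forgets.
   Context: A type of degree $d$ is a finite multiset of pairs $(b,m)$ of positive integers with $\sum bm=d$. For types $\tau=\{(b_1,m_1),\dots,(b_r,m_r)\}$ and $\lambda=\{(c_1,n_1),\dots,(c_s,n_s)\}$ (fixed orderings), an arrangement of $\tau$ into $\lambda$ is an $r\times s$ non-negative integer matrix $A$ with $A\vec n=\vec m$ and $A^T\vec b=\vec c$; $a(\tau,\lambda)$ is their number. Elementary merge: if two pairs $(d_1,m),(d_2,m)$ of $\tau$ have the same second entry, replace them by the single pair $(d_1+d_2,m)$. Elementary forget: replace a pair $(d_1,m_1)$ of $\tau$ by the two pairs $(d_1,m_1-a),(d_1,a)$ for some integer $0<a<m_1$. The partial order $\le$ on types of degree $d$ is: $\tau\le\lambda$ iff $\lambda$ is obtained from $\tau$ by a finite sequence of elementary merges and forgets. *)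

(* Defs.v *)
From mathcomp Require Import all_boot all_order all_algebra.
Set Implicit Arguments. Unset Strict Implicit. Unset Printing Implicit Defensive.

(* A type is a finite multiset of pairs (b,m) of positive integers; we
   represent it by a sequence, considered up to permutation (perm_eq). *)
Definition typ := seq (nat * nat).

Definition degree (t : typ) : nat := \sum_(p <- t) p.1 * p.2.

Definition is_type (d : nat) (t : typ) : Prop :=
  all (fun p : nat * nat => (0 < p.1) && (0 < p.2)) t /\ degree t = d.

(* Arrangement of t = ((b_i,m_i))_i into l = ((c_j,n_j))_j (fixed orderings):
   an r x s matrix A of nonnegative integers with A n = m and A^T b = c. *)
Definition is_arrangement (t l : typ) (A : 'M[nat]_(size t, size l)) : Prop :=
  (forall i : 'I_(size t),
      \sum_(j < size l) A i j * (nth (0,0) l j).2 = (nth (0,0) t i).2) /\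
  (forall j : 'I_(size l),
      \sum_(i < size t) A i j * (nth (0,0) t i).1 = (nth (0,0) l j).1).

Definition merge_step (t t' : typ) : Prop :=
  exists (u : typ) (d1 d2 m : nat),
    perm_eq t ((d1, m) :: (d2, m) :: u) /\ perm_eq t' ((d1 + d2, m) :: u).

Definition forget_step (t t' : typ) : Prop :=
  exists (u : typ) (d1 m1 a : nat),
    0 < a < m1 /\
    perm_eq t ((d1, m1) :: u) /\ perm_eq t' ((d1, m1 - a) :: (d1, a) :: u).

Inductive steps (R : typ -> typ -> Prop) : typ -> typ -> Prop :=
  | steps_refl t t' : perm_eq t t' -> steps R t t'
  | steps_cons t u v : R t u -> steps R u v -> steps R t v.

Definition type_le (t l : typ) : Prop :=
  steps (fun x y => merge_step x y \/ forget_step x y) t l.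

(* Main.v *)
Require Import Defs.
From mathcomp Require Import all_boot all_order all_algebra.
Set Implicit Arguments. Unset Strict Implicit. Unset Printing Implicit Defensive.

Lemma psym (a b : typ) : perm_eq a b -> perm_eq b a.
Proof. by rewrite perm_sym. Qed.

Definition permL (R : typ -> typ -> Prop) :=
  forall t t1 u, perm_eq t t1 -> R t u -> R t1 u.
Definition catC (R : typ -> typ -> Prop) :=
  forall t u c, R t u -> R (t ++ c) (u ++ c) /\ R (c ++ t) (c ++ u).

Lemma merge_permL : permL merge_step.
Proof.
move=> t t1 u Hp [w [d1 [d2 [m [H1 H2]]]]].
exists w, d1, d2, m; split=> //. exact: perm_trans (psym Hp) H1.
Qed.

Lemma forget_permL : permL forget_step.
Proof.
move=> t t1 u Hp [w [d1 [m1 [a [Ha [H1 H2]]]]]].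
exists w, d1, m1, a; split=> //; split=> //; exact: perm_trans (psym Hp) H1.
Qed.

Lemma mf_permL : permL (fun x y => merge_step x y \/ forget_step x y).
Proof.
move=> t t1 u Hp [H|H]; [left; exact: merge_permL Hp H|right; exact: forget_permL Hp H].
Qed.

Lemma merge_catC : catC merge_step.
Proof.
move=> t u c [w [d1 [d2 [m [H1 H2]]]]]; split.
- exists (w ++ c), d1, d2, m; split.
  + by rewrite -[_ :: _ :: w ++ c]/((_ :: _ :: w) ++ c) perm_cat2r.
  + by rewrite -[_ :: w ++ c]/((_ :: w) ++ c) perm_cat2r.
- exists (w ++ c), d1, d2, m; split.
  + rewrite perm_catC.
    by rewrite -[_ :: _ :: w ++ c]/((_ :: _ :: w) ++ c) perm_cat2r.
  + rewrite perm_catC.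
    by rewrite -[_ :: w ++ c]/((_ :: w) ++ c) perm_cat2r.
Qed.

Lemma forget_catC : catC forget_step.
Proof.
move=> t u c [w [d1 [m1 [a [Ha [H1 H2]]]]]]; split.
- exists (w ++ c), d1, m1, a; split=> //; split.
  + by rewrite -[_ :: w ++ c]/((_ :: w) ++ c) perm_cat2r.
  + by rewrite -[_ :: _ :: w ++ c]/((_ :: _ :: w) ++ c) perm_cat2r.
- exists (w ++ c), d1, m1, a; split=> //; split.
  + rewrite perm_catC.
    by rewrite -[_ :: w ++ c]/((_ :: w) ++ c) perm_cat2r.
  + rewrite perm_catC.
    by rewrite -[_ :: _ :: w ++ c]/((_ :: _ :: w) ++ c) perm_cat2r.
Qed.

Section Steps.
Variable R : typ -> typ -> Prop.
Hypothesis HP : permL R.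
Hypothesis HC : catC R.

Lemma steps1 t u : R t u -> steps R t u.
Proof. move=> H; apply: steps_cons H (steps_refl _ (perm_refl _)). Qed.

Lemma steps_permR t u v : steps R t u -> perm_eq u v -> steps R t v.
Proof.
elim=> [a b Hab|a b c Hab _ IH] Hp.
- exact: steps_refl (perm_trans Hab Hp).
- exact: steps_cons Hab (IH Hp).
Qed.

Lemma steps_permL t u v : perm_eq t u -> steps R u v -> steps R t v.
Proof.
move=> Hp H; case: H Hp => [a b Hab|a b c Hab H] Hp.
- exact: steps_refl (perm_trans Hp Hab).
- exact: steps_cons (HP (psym Hp) Hab) H.
Qed.

Lemma steps_trans t u v : steps R t u -> steps R u v -> steps R t v.
Proof.
elim=> [a b Hab|a b c Hab _ IH] H.
- exact: steps_permL Hab H.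
- exact: steps_cons Hab (IH H).
Qed.

Lemma steps_catr t u c : steps R t u -> steps R (t ++ c) (u ++ c).
Proof.
elim=> [a b Hab|a b d Hab _ IH].
- by apply: steps_refl; rewrite perm_cat2r.
- exact: steps_cons (proj1 (HC c Hab)) IH.
Qed.

Lemma steps_catl t u c : steps R t u -> steps R (c ++ t) (c ++ u).
Proof.
elim=> [a b Hab|a b d Hab _ IH].
- by apply: steps_refl; rewrite perm_cat2l.
- exact: steps_cons (proj2 (HC c Hab)) IH.
Qed.

Lemma steps_cat t t' u u' : steps R t t' -> steps R u u' -> steps R (t ++ u) (t' ++ u').
Proof.
move=> H1 H2; apply: steps_trans (steps_catr u H1) (steps_catl t' H2).
Qed.

Lemma steps_flatten (F G : nat -> typ) r :
  (forall k, k \in r -> steps R (F k) (G k)) ->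
  steps R (flatten (map F r)) (flatten (map G r)).
Proof.
elim: r => [|k r IH] H /=; first exact: steps_refl.
apply: steps_cat; first by apply: H; rewrite inE eqxx.
by apply: IH => k' Hk; apply: H; rewrite inE Hk orbT.
Qed.
End Steps.

Lemma steps_mono (R S : typ -> typ -> Prop) t u :
  (forall x y, R x y -> S x y) -> steps R t u -> steps S t u.
Proof.
move=> HRS; elim=> [a b Hab|a b c Hab _ IH]; first exact: steps_refl.
exact: steps_cons (HRS _ _ Hab) IH.
Qed.

Definition arrN (t l : typ) := exists f : nat -> nat -> nat,
 (forall i, i < size t -> \sum_(j < size l) f i j * (nth (0,0) l j).2 = (nth (0,0) t i).2) /\
 (forall j, j < size l -> \sum_(i < size t) f i j * (nth (0,0) t i).1 = (nth (0,0) l j).1).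

Lemma sum_delta n i (F : nat -> nat) : i < n -> \sum_(j < n) (i == j) * F j = F i.
Proof.
move=> Hi; rewrite (bigD1 (Ordinal Hi)) //= eqxx mul1n big1 ?addn0 //.
move=> j; rewrite -val_eqE /= eq_sym => /negbTE -> //.
Qed.

Lemma arrN_id t : arrN t t.
Proof.
exists (fun i j => i == j); split=> i Hi; first exact: (sum_delta (fun k => (nth (0,0) t k).2) Hi).
rewrite -(sum_delta (fun k => (nth (0,0) t k).1) Hi).
by apply: eq_bigr => k _; rewrite eq_sym.
Qed.

Lemma arrN_trans t u l : arrN t u -> arrN u l -> arrN t l.
Proof.
move=> [f [H1 H2]] [g [G1 G2]].
exists (fun i k => \sum_(j < size u) f i j * g j k); split.
- move=> i Hi; rewrite -H1 //.
  under eq_bigr => k _ do rewrite big_distrl /=.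
  rewrite exchange_big /=; apply: eq_bigr => j _.
  rewrite -G1 // big_distrr /=; apply: eq_bigr => k _; by rewrite mulnA.
- move=> k Hk; rewrite -G2 //.
  under eq_bigr => i _ do rewrite big_distrl /=.
  rewrite exchange_big /=; apply: eq_bigr => j _.
  rewrite -H2 // big_distrr /=; apply: eq_bigr => i _.
  by rewrite mulnCA mulnA.
Qed.

Lemma nth_cat_add (a b : typ) k : nth (0,0) (a ++ b) (size a + k) = nth (0,0) b k.
Proof. by rewrite nth_cat ltnNge leq_addr /= addKn. Qed.

Lemma arrN_cat a a' b b' : arrN a a' -> arrN b b' -> arrN (a ++ b) (a' ++ b').
Proof.
move=> [f [H1 H2]] [g [G1 G2]].
exists (fun i j => if i < size a then (if j < size a' then f i j else 0)
                   else (if j < size a' then 0 else g (i - size a) (j - size a'))).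
split.
- move=> i; rewrite !size_cat => Hi; rewrite big_split_ord /=.
  rewrite nth_cat; case: ifP => Hia.
  + rewrite -H1 // [X in _ + X]big1 ?addn0.
      by apply: eq_bigr => j _; rewrite ltn_ord nth_cat ltn_ord.
    by move=> j _; rewrite ltnNge leq_addr.
  + rewrite big1 ?add0n.
      rewrite -G1; last by rewrite ltn_subLR // leqNgt Hia.
      apply: eq_bigr => j _; rewrite ltnNge leq_addr /= addKn.
      by rewrite nth_cat_add.
    by move=> j _; rewrite ltn_ord.
- move=> j; rewrite !size_cat => Hj; rewrite big_split_ord /=.
  rewrite nth_cat; case: ifP => Hja.
  + rewrite -H2 // [X in _ + X]big1 ?addn0.
      by apply: eq_bigr => i _; rewrite ltn_ord nth_cat ltn_ord.
    by move=> i _; rewrite ltnNge leq_addr /=.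
  + rewrite big1 ?add0n.
      rewrite -G2; last by rewrite ltn_subLR // leqNgt Hja.
      apply: eq_bigr => i _; rewrite ltnNge leq_addr /= addKn.
      by rewrite nth_cat_add.
    by move=> i _; rewrite ltn_ord.
Qed.

Lemma arrN_swap x y : arrN [:: x; y] [:: y; x].
Proof.
exists (fun i j => i + j == 1); split.
- by case=> [|[|i]] // _; rewrite !big_ord_recl big_ord0 /= ?addn0 ?mul0n ?mul1n ?add0n ?addn0.
- by case=> [|[|i]] // _; rewrite !big_ord_recl big_ord0 /= ?addn0 ?mul0n ?mul1n ?add0n ?addn0.
Qed.

Lemma arrN_merge d1 d2 m : arrN [:: (d1, m); (d2, m)] [:: (d1 + d2, m)].
Proof.
exists (fun _ _ => 1); split.
- by case=> [|[|i]] // _; rewrite !big_ord_recl big_ord0 /= ?addn0 ?mul1n.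
- by case=> [|i] // _; rewrite !big_ord_recl big_ord0 /= ?addn0 ?mul1n.
Qed.

Lemma arrN_forget d1 m1 a : a <= m1 -> arrN [:: (d1, m1)] [:: (d1, m1 - a); (d1, a)].
Proof.
move=> Ha; exists (fun _ _ => 1); split.
- by case=> [|i] // _; rewrite !big_ord_recl big_ord0 /= ?addn0 ?mul1n subnK.
- by case=> [|[|i]] // _; rewrite !big_ord_recl big_ord0 /= ?addn0 ?mul1n.
Qed.

Lemma arrN_move x q p : arrN (x :: p ++ q) (p ++ x :: q).
Proof.
elim: p => [|y p IH] /=; first exact: arrN_id.
apply: (@arrN_trans _ (y :: x :: p ++ q)).
  exact: (arrN_cat (arrN_swap x y) (arrN_id (p ++ q))).
exact: (arrN_cat (arrN_id [:: y]) IH).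
Qed.

Lemma arrN_perm t t' : perm_eq t t' -> arrN t t'.
Proof.
elim: t t' => [|x t IH] t' Hp.
  by move: Hp; rewrite perm_sym => /perm_nilP ->; exact: arrN_id.
have Hx : x \in t' by rewrite -(perm_mem Hp) inE eqxx.
move: Hp; case/splitPr: Hx => p q Hp.
have Hp' : perm_eq t (p ++ q).
  by rewrite -(perm_cons x); apply: perm_trans Hp _; rewrite -cat1s perm_catCA.
apply: (@arrN_trans _ (x :: p ++ q)); last exact: arrN_move.
exact: (arrN_cat (arrN_id [:: x]) (IH _ Hp')).
Qed.

Lemma sum_sumn n (F : nat -> nat) : \sum_(j < n) F j = sumn (map F (iota 0 n)).
Proof. rewrite sumnE big_map -(big_mkord xpredT). by rewrite /index_iota subn0. Qed.

Lemma forget_expand (p : nat * nat) s :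
  all (fun x => 0 < x) s -> sumn s = p.2 -> 0 < p.2 ->
  steps forget_step [:: p] [seq (p.1, x) | x <- s].
Proof.
case: p => b m /=; elim: s m => [|x s IH] m //=; first by move=> _ <-.
case/andP=> Hx Hs Hm Hm0.
case: s IH Hs Hm => [|y s] IH Hs Hm.
  by apply: steps_refl; rewrite -Hm /= addn0.
set S := sumn (y :: s).
have HS : 0 < S by rewrite /S /=; case/andP: Hs => Hy _; apply: leq_trans Hy (leq_addr _ _).
apply: (@steps_trans _ forget_permL _ [:: (b, x); (b, S)]).
  apply: steps1; exists [::], b, m, S; split.
    by rewrite HS /= -Hm -{1}[S]add0n ltn_add2r.
  by split=> //; rewrite -Hm addnK.
exact: (steps_catl forget_catC [:: (b, x)] (IH S Hs erefl HS)).
Qed.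

Lemma merge_collapse n s : s != [::] ->
  steps merge_step [seq (x, n) | x <- s] [:: (sumn s, n)].
Proof.
elim: s => [|x s IH] //= _.
case: s IH => [|y s] IH /=.
  by apply: steps_refl; rewrite addn0.
apply: (@steps_trans _ merge_permL _ [:: (x, n); (sumn (y :: s), n)]).
  exact: (steps_catl merge_catC [:: (x, n)] (IH erefl)).
by apply: steps1; exists [::], x, (sumn (y :: s)), n.
Qed.

Lemma perm_flatten_cat (F G : nat -> typ) J :
  perm_eq (flatten [seq F j ++ G j | j <- J]) (flatten (map F J) ++ flatten (map G J)).
Proof.
elim: J => [|j J IH] //=.
rewrite -!catA perm_cat2l perm_sym perm_catCA perm_cat2l perm_sym.
exact: IH.
Qed.

Lemma perm_flatten_swap (g : nat -> nat -> typ) I J :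
  perm_eq (flatten [seq flatten [seq g i j | j <- J] | i <- I])
          (flatten [seq flatten [seq g i j | i <- I] | j <- J]).
Proof.
elim: I => [|i I IH] /=; first by elim: J.
apply: perm_trans (perm_cat (perm_refl _) IH) _.
rewrite perm_sym; exact: (perm_flatten_cat (fun j => g i j)
  (fun j => flatten [seq g i0 j | i0 <- I]) J).
Qed.

Lemma pos_nth d l j : is_type d l -> j < size l ->
  0 < (nth (0,0) l j).1 /\ 0 < (nth (0,0) l j).2.
Proof.
move=> [Hall _] Hj; have := allP Hall _ (mem_nth (0,0) Hj).
by case/andP.
Qed.

Lemma flatten_single (t : typ) :
  t = flatten [seq [:: nth (0,0) t i] | i <- iota 0 (size t)].
Proof.
have -> : [seq [:: nth (0,0) t i] | i <- iota 0 (size t)] =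
          [seq [:: y] | y <- mkseq (nth (0,0) t) (size t)] by rewrite /mkseq -map_comp.
by rewrite flatten_seq1 mkseq_nth.
Qed.

Lemma arrN_FM d t l : is_type d t -> is_type d l -> arrN t l ->
  exists mu, steps forget_step t mu /\ steps merge_step mu l.
Proof.
move=> Ht Hl [f [Hr Hc]].
pose b i := (nth (0,0) t i).1. pose n j := (nth (0,0) l j).2.
pose s i := flatten [seq nseq (f i j) (n j) | j <- iota 0 (size l)].
pose cl j := flatten [seq nseq (f i j) (b i) | i <- iota 0 (size t)].
pose g i j := nseq (f i j) (b i, n j).
exists (flatten [seq [seq (b i, x) | x <- s i] | i <- iota 0 (size t)]); split.
  rewrite {1}(flatten_single t).
  apply: (steps_flatten forget_permL forget_catC) => i; rewrite mem_iota /= => Hi.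
  apply: forget_expand.
  - apply/allP => x /flattenP [y /mapP [j Hj ->]]; rewrite mem_nseq => /andP [_ /eqP ->].
    by move: Hj; rewrite mem_iota /= => Hj; case: (pos_nth Hl Hj).
  - rewrite sumn_flatten -map_comp -(Hr _ Hi) (sum_sumn (size l) (fun j => f i j * (nth (0,0) l j).2)); congr sumn; apply: eq_map => j /=.
    by rewrite sumn_nseq mulnC.
  - by case: (pos_nth Ht Hi).
have E1 : [seq [seq (b i, x) | x <- s i] | i <- iota 0 (size t)] =
          [seq flatten [seq g i j | j <- iota 0 (size l)] | i <- iota 0 (size t)].
  apply: eq_map => i; rewrite map_flatten -map_comp; congr flatten.
  by apply: eq_map => j /=; rewrite map_nseq.
have E2 : [seq flatten [seq g i j | i <- iota 0 (size t)] | j <- iota 0 (size l)] =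
          [seq [seq (x, n j) | x <- cl j] | j <- iota 0 (size l)].
  apply: eq_map => j; rewrite map_flatten -map_comp; congr flatten.
  by apply: eq_map => i /=; rewrite map_nseq.
rewrite E1; apply: (steps_permL merge_permL (perm_flatten_swap g _ _)).
rewrite E2 [X in steps _ _ X](flatten_single l).
apply: (steps_flatten merge_permL merge_catC) => j; rewrite mem_iota /= => Hj.
have Hs : sumn (cl j) = (nth (0,0) l j).1.
  rewrite sumn_flatten -map_comp -(Hc _ Hj) (sum_sumn (size t) (fun i => f i j * (nth (0,0) t i).1)); congr sumn; apply: eq_map => i /=.
  by rewrite sumn_nseq mulnC.
have -> : nth (0,0) l j = (sumn (cl j), n j) by rewrite Hs /n; case: (nth _ _ _).
apply: merge_collapse; apply/eqP => Hn.
by case: (pos_nth Hl Hj); rewrite -Hs Hn.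
Qed.

Lemma ins n i (Hi : i < n) : (insub i : option 'I_n) = Some (Ordinal Hi).
Proof. by rewrite insubT. Qed.

Lemma arr_arrN t l : (exists A : 'M[nat]_(size t, size l), is_arrangement A) <-> arrN t l.
Proof.
split.
- move=> [A [H1 H2]].
  exists (fun i j => match (insub i : option 'I_(size t)), (insub j : option 'I_(size l)) with
                     | Some i', Some j' => A i' j' | _, _ => 0 end); split.
  + move=> i Hi; rewrite -(H1 (Ordinal Hi)); apply: eq_bigr => j _.
    by rewrite (ins Hi) valK.
  + move=> j Hj; rewrite -(H2 (Ordinal Hj)); apply: eq_bigr => i _.
    by rewrite (ins Hj) valK.
- move=> [f [H1 H2]]; exists (\matrix_(i, j) f i j)%R; split.
  + move=> i; rewrite -(H1 _ (ltn_ord i)); apply: eq_bigr => j _; by rewrite mxE.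
  + move=> j; rewrite -(H2 _ (ltn_ord j)); apply: eq_bigr => i _; by rewrite mxE.
Qed.

Lemma typele_arrN t l : type_le t l -> arrN t l.
Proof.
elim=> [a b Hab|a u v Hau _ IH]; first exact: arrN_perm.
apply: arrN_trans _ IH.
case: Hau => [[w [d1 [d2 [m [H1 H2]]]]]|[w [d1 [m1 [a0 [Ha [H1 H2]]]]]]].
- apply: arrN_trans (arrN_perm H1) _.
  apply: arrN_trans _ (arrN_perm (psym H2)).
  exact: (arrN_cat (arrN_merge d1 d2 m) (arrN_id w)).
- apply: arrN_trans (arrN_perm H1) _.
  apply: arrN_trans _ (arrN_perm (psym H2)).
  case/andP: Ha => _ Ha.
  exact: (arrN_cat (arrN_forget d1 (ltnW Ha)) (arrN_id w)).
Qed.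

Lemma FM_typele t l : (exists mu, steps forget_step t mu /\ steps merge_step mu l) ->
  type_le t l.
Proof.
move=> [mu [H1 H2]].
apply: (steps_trans mf_permL).
  by apply: (steps_mono _ H1) => x y H; right.
by apply: (steps_mono _ H2) => x y H; left.
Qed.

Theorem proposition4 (d : nat) (tau lam : typ) :
  is_type d tau -> is_type d lam ->
  ((exists A : 'M[nat]_(size tau, size lam), is_arrangement A) <->
     (exists mu : typ, steps forget_step tau mu /\ steps merge_step mu lam))
  /\
  ((exists A : 'M[nat]_(size tau, size lam), is_arrangement A) <->
     type_le tau lam).
Proof.
move=> Ht Hl; split; split.
- by move/arr_arrN; exact: arrN_FM Ht Hl.
- by move=> H; apply/arr_arrN; apply: typele_arrN; apply: FM_typele.
- by move/arr_arrN => H; apply: FM_typele; apply: arrN_FM Ht Hl H.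
- by move=> H; apply/arr_arrN; exact: typele_arrN.
Qed.
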